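(* Let $b>0$, $k>0$, $c>1$ and $E\in(0,1)$. Define $$m_{SN}=\frac{-E^2k^2+2Eck-2Ek+c-1}{E^2(E^2k^2+2Ek+1)},$$ $$a_1=\frac{E^4k^2-2E^3k^2+2E^3k+3E^2ck+E^2k^2-4E^2k-2Eck+E^2+2Ec+2Ek-2E-c+1}{cE^2(E^2k^2+2Ek+1)},$$ and assume $a_1>0$, $m_{SN}>0$. Consider, with $a=a_1$ and bifurcation parameter $m>0$, the system $$\frac{dx}{dt}=bx(1-x-cy),\qquad \frac{dy}{dt}=y\Big(\frac{1}{1+kx}-y-ax-mxy\Big),$$ for which, at $m=m_{SN}$, $E_{3*}=(E,(1-E)/c)$ is a positive equilibrium. Suppose that at $m=m_{SN}$ one has $m>m_1:=1-ac-k$ and $0<k<\frac1a-1$, and that $c\ne\frac{E^3k^3+3E^2k^2+3Ek+1}{3E^2k^2+3Ek+1}$. Then the system undergoes a saddle-node bifurcation around $E_{3*}$ at the bifurcation parameter threshold $m=m_{SN}$.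
   Context: The values $m_{SN}$ and $a_1$ are exactly those for which $E$ is a double root of the cubic $u(x)=kmx^3+((-ac-m+1)k+m)x^2+(-ac-k-m+1)x+c-1$, i.e. $u(E)=u'(E)=0$; roots of $u$ in $(0,1)$ are the $x$-coordinates of positive equilibria $(x,(1-x)/c)$. *)

(* Defs.v *)
From HB Require Import structures.
From mathcomp Require Import all_boot all_order all_algebra.
From mathcomp Require Import all_classical all_reals all_analysis.
Set Implicit Arguments. Unset Strict Implicit. Unset Printing Implicit Defensive.
Import Order.TTheory GRing.Theory Num.Theory.
Local Open Scope ring_scope.

Section Defs.
Variable R : realType.

(* Planar vector field depending on a scalar parameter m: F m x y = (dx/dt, dy/dt). *)
Definition pfield := R -> R -> R -> R * R.

Definition lv_field (b c k a : R) : pfield :=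
  fun m x y => (b * x * (1 - x - c * y),
                y * ((1 + k * x)^-1 - y - a * x - m * x * y)).

Definition is_equil (F : pfield) (m : R) (p : R * R) : Prop :=
  F m p.1 p.2 = (0, 0).

Definition jac11 (F : pfield) m (p : R * R) := derive1 (fun t => (F m t p.2).1) p.1.
Definition jac12 (F : pfield) m (p : R * R) := derive1 (fun t => (F m p.1 t).1) p.2.
Definition jac21 (F : pfield) m (p : R * R) := derive1 (fun t => (F m t p.2).2) p.1.
Definition jac22 (F : pfield) m (p : R * R) := derive1 (fun t => (F m p.1 t).2) p.2.
Definition jdet (F : pfield) m p := jac11 F m p * jac22 F m p - jac12 F m p * jac21 F m p.
Definition jtr (F : pfield) m p := jac11 F m p + jac22 F m p.

Definition in_ball (p0 : R * R) (r : R) (p : R * R) : Prop :=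
  (p.1 - p0.1) ^+ 2 + (p.2 - p0.2) ^+ 2 < r ^+ 2.

(* Saddle-node bifurcation of equilibria of F at p0 when m crosses m0:
   - p0 is an equilibrium at m0 with a simple zero eigenvalue
     (det J = 0, trace J <> 0);
   - locally (in a ball around p0, for m near m0) p0 is the only equilibrium
     at m = m0; on one side of m0 there is no equilibrium, on the other side
     there are exactly two, one a saddle (det J < 0) and one a node
     (det J > 0 with real distinct eigenvalues, tr^2 - 4 det > 0). *)
Definition saddle_node_bif (F : pfield) (m0 : R) (p0 : R * R) : Prop :=
  [/\ is_equil F m0 p0, jdet F m0 p0 = 0, jtr F m0 p0 != 0 &
   exists r eps : R, [/\ 0 < r, 0 < eps,
     (forall p, in_ball p0 r p -> is_equil F m0 p -> p = p0) &
     exists s : R, [/\ s = 1 \/ s = -1,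
       (forall m, 0 < s * (m - m0) < eps ->
          forall p, in_ball p0 r p -> ~ is_equil F m p) &
       (forall m, 0 < s * (m0 - m) < eps ->
          exists p q : R * R, [/\ p <> q,
            in_ball p0 r p /\ is_equil F m p,
            in_ball p0 r q /\ is_equil F m q,
            (forall z, in_ball p0 r z -> is_equil F m z -> z = p \/ z = q) &
            [/\ jdet F m p < 0, 0 < jdet F m q &
                0 < jtr F m q ^+ 2 - 4 * jdet F m q]])]]].

Definition m_SN (k c E : R) : R :=
  (- E^+2 * k^+2 + 2 * E * c * k - 2 * E * k + c - 1)
  / (E^+2 * (E^+2 * k^+2 + 2 * E * k + 1)).

Definition a_1 (k c E : R) : R :=
  (E^+4 * k^+2 - 2 * E^+3 * k^+2 + 2 * E^+3 * k + 3 * E^+2 * c * k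
   + E^+2 * k^+2 - 4 * E^+2 * k - 2 * E * c * k + E^+2 + 2 * E * c
   + 2 * E * k - 2 * E - c + 1)
  / (c * E^+2 * (E^+2 * k^+2 + 2 * E * k + 1)).

End Defs.

(* Main.v *)
Require Import Defs.
From HB Require Import structures.
From mathcomp Require Import all_boot all_order all_algebra.
From mathcomp Require Import all_classical all_reals all_analysis.
From mathcomp Require Import ring lra.
Import Order.TTheory GRing.Theory Num.Theory.
Local Open Scope ring_scope.

Section Core.
Variable R : realType.
Variables (b k c a : R).
Hypotheses (hb : 0 < b) (hk : 0 < k) (hc : 1 < c) (ha : 0 < a).

Local Notation F := (lv_field b c k a).

Lemma jac11E m p : jac11 F m p = b * (1 - 2 * p.1 - c * p.2).
Proof.
rewrite /jac11 /lv_field /= derive1E.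
have H : is_derive p.1 1 (fun t : R => b * t * (1 - t - c * p.2))
   (b * (1 - 2 * p.1 - c * p.2)).
  by apply: is_derive_eq; rewrite /GRing.scale /=; ring.
exact: derive_val.
Qed.

Lemma jac12E m p : jac12 F m p = - (b * c * p.1).
Proof.
rewrite /jac12 /lv_field /= derive1E.
have H : is_derive p.2 1 (fun t : R => b * p.1 * (1 - p.1 - c * t))
   (- (b * c * p.1)).
  by apply: is_derive_eq; rewrite /GRing.scale /=; ring.
exact: derive_val.
Qed.

Lemma jac21E m p : 1 + k * p.1 != 0 ->
  jac21 F m p = p.2 * (- (k * ((1 + k * p.1)^-1) ^+ 2) - a - m * p.2).
Proof.
move=> hx; rewrite /jac21 /lv_field /= derive1E.
have H : is_derive p.1 1 (fun t : R => p.2 * ((1 + k * t)^-1 - p.2 - a * t - m * t * p.2))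
   (p.2 * (- (k * ((1 + k * p.1)^-1) ^+ 2) - a - m * p.2)).
  by apply: is_derive_eq; rewrite /GRing.scale /=; field.
exact: derive_val.
Qed.

Lemma jac22E m p :
  jac22 F m p = (1 + k * p.1)^-1 - 2 * p.2 - a * p.1 - 2 * m * p.1 * p.2.
Proof.
rewrite /jac22 /lv_field /= derive1E.
have H : is_derive p.2 1 (fun t : R => t * ((1 + k * p.1)^-1 - t - a * p.1 - m * p.1 * t))
   ((1 + k * p.1)^-1 - 2 * p.2 - a * p.1 - 2 * m * p.1 * p.2).
  by apply: is_derive_eq; rewrite /GRing.scale /=; ring.
exact: derive_val.
Qed.

End Core.

Section Core2.
Variable R : realType.
Variables (b k c a E m0 A0 : R).
Hypotheses (hb : 0 < b) (hk : 0 < k) (hc : 1 < c) (ha : 0 < a)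
  (hE0 : 0 < E) (hE1 : E < 1) (hm0 : 0 < m0) (hA0 : 0 < A0)
  (H2 : (- a * c - m0 + 1) * k + m0 = A0 - 3 * k * m0 * E)
  (H1 : - a * c - k - m0 + 1 = 3 * k * m0 * E ^+ 2 - 2 * A0 * E)
  (H0 : c - 1 = A0 * E ^+ 2 - k * m0 * E ^+ 3).

Local Notation F := (lv_field b c k a).
Ltac hyps := have := hb; have := hk; have := hc; have := ha; have := hE0;
  have := hE1; have := hm0; have := hA0; intros.

Definition uu (m x : R) := k * m * x ^+ 3 + ((- a * c - m + 1) * k + m) * x ^+ 2
  + (- a * c - k - m + 1) * x + (c - 1).
Definition uu' (m x : R) := 3 * k * m * x ^+ 2 + 2 * ((- a * c - m + 1) * k + m) * x
  + (- a * c - k - m + 1).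
Definition LL (m x s : R) := (- a * c - k - m + 1) + ((- a * c - m + 1) * k + m) * (x + s)
  + k * m * (x ^+ 2 + x * s + s ^+ 2).
Definition KK (m x1 x2 x3 : R) := ((- a * c - m + 1) * k + m) + k * m * (x1 + x2 + x3).

Lemma I1 m x s : uu m s - uu m x = (s - x) * LL m x s.
Proof. rewrite /uu /LL; ring. Qed.
Lemma I2 m x1 x2 x3 : LL m x2 x3 - LL m x1 x2 = (x3 - x1) * KK m x1 x2 x3.
Proof. rewrite /LL /KK; ring. Qed.
Lemma I3 m x : uu' m x = LL m x x.
Proof. rewrite /uu' /LL; ring. Qed.

Lemma hc0 : c != 0.
Proof. have h : 0 < c by apply: lt_trans hc. by rewrite gt_eqF. Qed.

Lemma uu_g m x : 1 + k * x != 0 -> uu m x =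
  c * (1 + k * x) * ((1 + k * x)^-1 - (1 - x) / c - a * x - m * x * ((1 - x) / c)).
Proof. move=> h; rewrite /uu; field; rewrite h hc0 //. Qed.

Lemma equil_u m x : 0 < 1 + k * x -> uu m x = 0 -> is_equil F m (x, (1 - x) / c).
Proof.
move=> h1 hu; rewrite /is_equil /lv_field /=.
have h1' : 1 + k * x != 0 by rewrite gt_eqF.
have e1 : 1 - x - c * ((1 - x) / c) = 0 by field; rewrite hc0.
have e2 : (1 + k * x)^-1 - (1 - x) / c - a * x - m * x * ((1 - x) / c) = 0.
  have := uu_g m x h1'; rewrite hu => /esym /eqP; rewrite mulf_eq0 mulf_eq0 (negbTE hc0) (negbTE h1') /=.
  by move/eqP.
by rewrite e1 e2 !mulr0.
Qed.

Lemma u_equil m x y : 0 < x -> 0 < y -> 0 < 1 + k * x -> is_equil F m (x, y) ->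
  y = (1 - x) / c /\ uu m x = 0.
Proof.
move=> hx hy h1; rewrite /is_equil /lv_field /= => -[e1 e2].
have h1' : 1 + k * x != 0 by rewrite gt_eqF.
have ey : y = (1 - x) / c.
  move/eqP: e1; rewrite mulf_eq0 mulf_eq0 (gt_eqF hb) (gt_eqF hx) /= => /eqP e.
  apply: (mulfI hc0); rewrite mulrCA divff ?hc0 // mulr1; lra.
split => //.
rewrite (uu_g m x h1') -ey.
move/eqP: e2; rewrite mulf_eq0 (gt_eqF hy) /= => /eqP ->.
by rewrite mulr0.
Qed.

Lemma gzero m x : 0 < 1 + k * x -> uu m x = 0 ->
  (1 + k * x)^-1 = (1 - x) / c + a * x + m * x * ((1 - x) / c).
Proof.
move=> h1 hu.
have h1' : 1 + k * x != 0 by rewrite gt_eqF.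
have := uu_g m x h1'; rewrite hu => /esym /eqP; rewrite mulf_eq0 mulf_eq0 (negbTE hc0) (negbTE h1') /=.
move/eqP => e; apply/eqP; rewrite -subr_eq0; apply/eqP; rewrite -e; ring.
Qed.

Lemma det_mul m x : 0 < 1 + k * x -> uu m x = 0 ->
  jdet F m (x, (1 - x) / c) * (1 + k * x) = b * x * ((1 - x) / c) * uu' m x.
Proof.
move=> h1 hu.
have h1' : 1 + k * x != 0 by rewrite gt_eqF.
rewrite /jdet jac11E jac12E jac22E jac21E //=.
have hw := gzero m x h1 hu.
have hw1 : (1 + k * x)^-1 * (1 + k * x) = 1 by rewrite mulVf.
set w := (1 + k * x)^-1 in hw hw1 *.
have hw2 : w ^+ 2 * (1 + k * x) = w by rewrite expr2 -mulrA hw1 mulr1.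
set y := (1 - x) / c in hw *.
have -> : (b * (1 - 2 * x - c * y) * (w - 2 * y - a * x - 2 * m * x * y) -
   - (b * c * x) * (y * (- (k * w ^+ 2) - a - m * y))) * (1 + k * x)
  = b * (1 - 2 * x - c * y) * (w - 2 * y - a * x - 2 * m * x * y) * (1 + k * x)
    + b * c * x * y * (- k * (w ^+ 2 * (1 + k * x)) - (a + m * y) * (1 + k * x)) by ring.
rewrite hw2 hw /y /uu'; field; exact: hc0.
Qed.

Lemma tr_eq m x : 0 < 1 + k * x -> uu m x = 0 ->
  jtr F m (x, (1 - x) / c) = - (b * x) - (1 - x) / c - m * x * ((1 - x) / c).
Proof.
move=> h1 hu.
rewrite /jtr jac11E jac22E /= (gzero m x h1 hu); field; exact: hc0.
Qed.

Lemma disc_pos m p : 0 < p.1 -> 0 < p.2 -> 0 < m -> 0 < 1 + k * p.1 ->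
  0 < jtr F m p ^+ 2 - 4 * jdet F m p.
Proof.
move=> hx hy hm h1.
have -> : jtr F m p ^+ 2 - 4 * jdet F m p =
  (jac11 F m p - jac22 F m p) ^+ 2 + 4 * (jac12 F m p * jac21 F m p).
  by rewrite /jtr /jdet; ring.
rewrite jac12E jac21E; last by rewrite gt_eqF.
set w := (1 + k * p.1)^-1.
have hw : 0 <= k * w ^+ 2 by apply: mulr_ge0; [hyps; lra| apply: sqr_ge0].
have hc' : 0 < c by hyps; lra.
have : 0 < b * c * p.1 * p.2 * (k * w ^+ 2 + a + m * p.2).
  apply: mulr_gt0; last by hyps; nra.
  by rewrite !mulr_gt0.
have := sqr_ge0 (jac11 F m p - jac22 F m p).
move: (b * c * p.1) => q.
hyps; nra.
Qed.

Local Notation u := uu.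

Lemma uu_dec m x : u m x =
  k * m0 * (x - E) ^+ 3 + A0 * (x - E) ^+ 2 + (m - m0) * (x * (k * x + 1) * (x - 1)).
Proof.
have -> : u m x = u m0 x + (m - m0) * (x * (k * x + 1) * (x - 1)) by rewrite /uu; ring.
rewrite /uu H2 H1 H0; ring.
Qed.

Lemma Dbound x : 0 < x -> x < 1 -> 0 < x * (k * x + 1) * (1 - x) < 1 + k.
Proof.
move=> h0 h1; apply/andP; split.
  apply: mulr_gt0; last by hyps; lra.
  apply: mulr_gt0 => //; hyps; nra.
have q1 : x * (1 - x) < 1 by hyps; nra.
have q2 : 0 < k * x + 1 by hyps; nra.
have q3 : k * x + 1 < k + 1 by hyps; nra.
have q4 : 0 < x * (1 - x) by hyps; nra.
have -> : x * (k * x + 1) * (1 - x) = (x * (1 - x)) * (k * x + 1) by ring.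
hyps; nra.
Qed.

Lemma sq_bound (t r : R) : 0 < r -> t ^+ 2 < r ^+ 2 -> - r < t < r.
Proof. move=> hr h; apply/andP; split; nra. Qed.

Lemma KK_pos m r eps x1 x2 x3 :
  0 < r -> r * (9 * k * m0) <= A0 -> eps * (3 * (1 + 4 * k)) <= A0 ->
  0 <= m - m0 < eps ->
  E - r <= x1 <= E + r -> E - r <= x2 <= E + r -> E - r <= x3 <= E + r ->
  0 <= x1 -> 0 <= x2 -> 0 <= x3 ->
  0 < KK m x1 x2 x3.
Proof.
move=> hr hr4 he1 /andP[hd1 hd2] /andP[h11 h12] /andP[h21 h22] /andP[h31 h32] p1 p2 p3.
have -> : KK m x1 x2 x3 = A0 + k * m0 * (x1 + x2 + x3 - 3 * E)
    + (m - m0) * (1 - k + k * (x1 + x2 + x3)).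
  rewrite /KK.
  have -> : (- a * c - m + 1) * k + m = ((- a * c - m0 + 1) * k + m0) + (m - m0) * (1 - k) by ring.
  rewrite H2; ring.
have q1 : 0 <= k * m0 * (x1 + x2 + x3 - 3 * E + 3 * r).
  apply: mulr_ge0; last by lra.
  by apply: mulr_ge0; hyps; lra.
have q2 : 0 <= (m - m0) * (k * (x1 + x2 + x3)).
  apply: mulr_ge0 => //; apply: mulr_ge0; hyps; lra.
have q3 : 0 <= (eps - m + m0) * k by apply: mulr_ge0; hyps; lra.
hyps; nra.
Qed.

Lemma three_roots m x1 x2 x3 : x1 != x2 -> x2 != x3 -> x1 != x3 ->
  u m x1 = 0 -> u m x2 = 0 -> u m x3 = 0 -> 0 < KK m x1 x2 x3 -> False.
Proof.
move=> d12 d23 d13 u1 u2 u3 hK.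
have L12 : LL m x1 x2 = 0.
  have := I1 m x1 x2; rewrite u1 u2 subrr => /esym /eqP.
  by rewrite mulf_eq0 subr_eq0 eq_sym (negbTE d12) /= => /eqP.
have L23 : LL m x2 x3 = 0.
  have := I1 m x2 x3; rewrite u2 u3 subrr => /esym /eqP.
  by rewrite mulf_eq0 subr_eq0 eq_sym (negbTE d23) /= => /eqP.
have := I2 m x1 x2 x3; rewrite L12 L23 subrr => /esym /eqP.
rewrite mulf_eq0 subr_eq0 eq_sym (negbTE d13) /= => /eqP hK0.
by move: hK; rewrite hK0 ltxx.
Qed.

Lemma in_ball_curve r x : 0 < r -> (x - E) ^+ 2 * 4 <= r ^+ 2 ->
  in_ball (E, (1 - E) / c) r (x, (1 - x) / c).
Proof.
move=> hr hx; rewrite /in_ball /=.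
have hc0' : c != 0 := hc0.
have e : ((1 - x) / c - (1 - E) / c) ^+ 2 * c ^+ 2 = (x - E) ^+ 2 by field.
have s0 := sqr_ge0 ((1 - x) / c - (1 - E) / c).
move: e s0; set s := ((1 - x) / c - (1 - E) / c) ^+ 2 => e s0.
have c2 : 0 < (c - 1) * (c + 1) by apply: mulr_gt0; hyps; lra.
have c3 : 0 <= s * ((c - 1) * (c + 1)) by apply: mulr_ge0 => //; lra.
have : s <= (x - E) ^+ 2 by rewrite -e; lra.
have : 0 < r ^+ 2 by rewrite exprn_gt0.
lra.
Qed.

Lemma core : saddle_node_bif F m0 (E, (1 - E) / c).
Proof.
hyps.
have hcp : 0 < c by hyps; lra.
have hy0 : 0 < (1 - E) / c by apply: divr_gt0 => //; lra.
have h1E : 0 < 1 + k * E by have := mulr_gt0 hk (_ : 0 < E); lra.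
have uE : u m0 E = 0 by rewrite uu_dec; ring.
split.
- exact: equil_u.
- have := det_mul m0 E h1E uE.
  have -> : uu' m0 E = 0 by rewrite /uu' H2 H1; ring.
  rewrite mulr0 => /eqP; rewrite mulf_eq0 (gt_eqF h1E) orbF => /eqP ->.
  done.
- rewrite (tr_eq m0 E) // lt_eqF //.
  have := mulr_gt0 (mulr_gt0 hm0 hE0) hy0.
  have := mulr_gt0 hb hE0.
  lra.
set y0 := (1 - E) / c.
set r := Num.min (Num.min (E / 2) ((1 - E) / 2)) (Num.min (y0 / 2) (A0 / (9 * k * m0))).
have h9 : 0 < 9 * k * m0 by rewrite !mulr_gt0.
have hr0 : 0 < r.
  rewrite /r !lt_min !divr_gt0 //; hyps; lra.
have [hr1 hr2 hr3 hr4] : [/\ r <= E / 2, r <= (1 - E) / 2, r <= y0 / 2 & r <= A0 / (9 * k * m0)].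
  by have := le_refl r; rewrite {2}/r !le_min => /andP[/andP[-> ->] /andP[-> ->]].
have hr4' : r * (9 * k * m0) <= A0 by rewrite -ler_pdivlMr.
have h3k : 0 < 3 * (1 + 4 * k) by hyps; lra.
have h8k : 0 < 8 * (1 + k) by hyps; lra.
set eps := Num.min (A0 / (3 * (1 + 4 * k))) (A0 * r ^+ 2 / (8 * (1 + k))).
have he0 : 0 < eps.
  rewrite /eps lt_min !divr_gt0 // ?mulr_gt0 // exprn_gt0 //.
have [he1 he2] : eps <= A0 / (3 * (1 + 4 * k)) /\ eps <= A0 * r ^+ 2 / (8 * (1 + k)).
  by have := le_refl eps; rewrite {2}/eps !le_min => /andP[-> ->].
have he1' : eps * (3 * (1 + 4 * k)) <= A0 by rewrite -ler_pdivlMr.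
have he2' : eps * (8 * (1 + k)) <= A0 * r ^+ 2 by rewrite -ler_pdivlMr.
clearbody r eps.
have ball : forall p, in_ball (E, y0) r p ->
    [/\ E - r < p.1, p.1 < E + r, 0 < p.1, p.1 < 1 & 0 < p.2].
  move=> [px py]; rewrite /in_ball /= => hp.
  have s1 := sqr_ge0 (px - E); have s2 := sqr_ge0 (py - y0).
  have hx2 : (px - E) ^+ 2 < r ^+ 2 by lra.
  have hy2 : (py - y0) ^+ 2 < r ^+ 2 by lra.
  have /andP[q1 q2] := sq_bound _ _ hr0 hx2.
  have /andP[q3 q4] := sq_bound _ _ hr0 hy2.
  split; lra.
have lowb : forall m x, E - r <= x <= E + r -> 0 <= m - m0 ->
    9 * u m x >= 8 * A0 * (x - E) ^+ 2 - 9 * (m - m0) * (1 + k).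
  move=> m x /andP[hx1 hx2] hd.
  have hx0 : 0 < x by lra.
  have hx1' : x < 1 by lra.
  have /andP[D1 D2] := Dbound x hx0 hx1'.
  have q1 : 0 <= (x - E) ^+ 2 * (9 * k * m0 * (x - E) + A0).
    apply: mulr_ge0; first exact: sqr_ge0.
    have : 0 <= k * m0 * (x - E + r) by apply: mulr_ge0; [apply: mulr_ge0; hyps; lra | lra].
    lra.
  have q2 : 0 <= (m - m0) * (1 + k - x * (k * x + 1) * (1 - x)).
    by apply: mulr_ge0 => //; lra.
  have -> : 9 * u m x = 8 * A0 * (x - E) ^+ 2 - 9 * (m - m0) * (1 + k)
     + ((x - E) ^+ 2 * (9 * k * m0 * (x - E) + A0)
        + 9 * ((m - m0) * (1 + k - x * (k * x + 1) * (1 - x)))).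
    by rewrite uu_dec; ring.
  lra.
exists r, eps; split => //.
- move=> [px py] hp he.
  have [q1 q2 q3 q4 q5] := ball _ hp.
  rewrite /= in q1 q2 q3 q4 q5.
  have h1x : 0 < 1 + k * px by have := mulr_gt0 hk (_ : 0 < px); lra.
  have [ey hu] := u_equil _ _ _ q3 q5 h1x he.
  move: hu; rewrite uu_dec subrr mul0r addr0 => hu.
  have : (px - E) ^+ 2 * (k * m0 * (px - E) + A0) = 0 by rewrite -hu; ring.
  move/eqP; rewrite mulf_eq0 sqrf_eq0 => /orP[/eqP hx|/eqP hx].
    have epx : px = E by apply/eqP; rewrite -subr_eq0; apply/eqP.
    by rewrite /= in ey; rewrite ey epx.
  have : 0 <= k * m0 * (px - E + r) by apply: mulr_ge0; [apply: mulr_ge0; hyps; lra | lra].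
  have hx' : k * m0 * (px - E) + A0 = 0 := hx.
  move=> a4; exfalso; clear hx; lra.
exists (-1); split; first by right.
- move=> m hm [px py] hp he.
  have [q1 q2 q3 q4 q5] := ball _ hp.
  rewrite /= in q1 q2 q3 q4 q5.
  have h1x : 0 < 1 + k * px by have := mulr_gt0 hk (_ : 0 < px); lra.
  have [ey hu] := u_equil _ _ _ q3 q5 h1x he.
  have /andP[D1 D2] := Dbound _ q3 q4.
  have hmm : m < m0 by move: hm; rewrite mulN1r opprB => /andP[h _]; lra.
  have t1 : 0 <= (px - E) ^+ 2 * (k * m0 * (px - E) + A0).
    apply: mulr_ge0; first exact: sqr_ge0.
    have : 0 <= k * m0 * (px - E + r) by apply: mulr_ge0; [apply: mulr_ge0; hyps; lra | lra].
    lra.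
  have t2 : 0 < (m0 - m) * (px * (k * px + 1) * (1 - px)) by apply: mulr_gt0 => //; lra.
  have : u m px = (px - E) ^+ 2 * (k * m0 * (px - E) + A0)
      + (m0 - m) * (px * (k * px + 1) * (1 - px)) by rewrite uu_dec; ring.
  lra.
move=> m hm.
have [hd0 hd1] : 0 < m - m0 /\ m - m0 < eps.
  by move: hm; rewrite mulN1r opprB => /andP[h1 h2]; split.
have hmpos : 0 < m by lra.
have uE0 : u m E < 0.
  have /andP[D1 D2] := Dbound E hE0 hE1.
  have : u m E = - ((m - m0) * (E * (k * E + 1) * (1 - E))) by rewrite uu_dec; ring.
  have : 0 < (m - m0) * (E * (k * E + 1) * (1 - E)) by apply: mulr_gt0.
  lra.
have uplus : 0 < u m (E + r / 2).
  have i1 : E - r <= E + r / 2 <= E + r by apply/andP; split; lra.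
  have i2 : 0 <= m - m0 by lra.
  have := lowb m (E + r / 2) i1 i2.
  have e : (E + r / 2 - E) ^+ 2 * 4 = r ^+ 2 by field.
  have : (m - m0) * (8 * (1 + k)) < eps * (8 * (1 + k)) by rewrite ltr_pM2r.
  have : 0 < r ^+ 2 by rewrite exprn_gt0.
  have : 0 < A0 * r ^+ 2 by rewrite mulr_gt0 // exprn_gt0.
  lra.
have uminus : 0 < u m (E - r / 2).
  have i1 : E - r <= E - r / 2 <= E + r by apply/andP; split; lra.
  have i2 : 0 <= m - m0 by lra.
  have := lowb m (E - r / 2) i1 i2.
  have e : (E - r / 2 - E) ^+ 2 * 4 = r ^+ 2 by field.
  have : (m - m0) * (8 * (1 + k)) < eps * (8 * (1 + k)) by rewrite ltr_pM2r.
  have : 0 < r ^+ 2 by rewrite exprn_gt0.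
  have : 0 < A0 * r ^+ 2 by rewrite mulr_gt0 // exprn_gt0.
  lra.
pose P : {poly R} := (k * m)%:P * 'X^3 + ((- a * c - m + 1) * k + m)%:P * 'X^2
  + (- a * c - k - m + 1)%:P * 'X + (c - 1)%:P.
have hP : forall x, P.[x] = u m x.
  move=> x; rewrite /P !hornerE /uu /=; ring.
clearbody P.
have [x2 /andP[x2a x2b] rx2] : exists2 x, E <= x <= E + r / 2 & root P x.
  apply: poly_ivt; first by lra.
  rewrite (hP E) (hP (E + r / 2)); apply/andP; split; lra.
have [x1 /andP[x1a x1b] rx1] : exists2 x, E - r / 2 <= x <= E & root (- P) x.
  apply: poly_ivt; first by lra.
  rewrite !hornerN (hP E) (hP (E - r / 2)); apply/andP; split; lra.
move: rx1 rx2; rewrite /root hornerN oppr_eq0 !hP => /eqP ux1 /eqP ux2.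
have x1E : x1 < E.
  rewrite lt_neqAle x1b andbT; apply/eqP => e; move: uE0; rewrite -e ux1; lra.
have x2E : E < x2.
  rewrite lt_neqAle x2a andbT; apply/eqP => e; move: uE0; rewrite e ux2; lra.
have h1x1 : 0 < 1 + k * x1 by have := mulr_gt0 hk (_ : 0 < x1); lra.
have h1x2 : 0 < 1 + k * x2 by have := mulr_gt0 hk (_ : 0 < x2); lra.
have Kp : forall z1 z2 z3, E - r <= z1 <= E + r -> E - r <= z2 <= E + r ->
    E - r <= z3 <= E + r -> 0 < KK m z1 z2 z3.
  move=> z1 z2 z3 hz1 hz2 hz3.
  apply: (KK_pos _ _ _ _ _ _ hr0 hr4' he1') => //.
  + by apply/andP; split; lra.
  + by case/andP: hz1 => ? ?; lra.
  + by case/andP: hz2 => ? ?; lra.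
  + by case/andP: hz3 => ? ?; lra.
have inr1 : E - r <= x1 <= E + r by apply/andP; split; lra.
have inr2 : E - r <= x2 <= E + r by apply/andP; split; lra.
have inrE : E - r <= E <= E + r by apply/andP; split; lra.
exists (x1, (1 - x1) / c), (x2, (1 - x2) / c); split.
- by case=> e _; lra.
- split; last exact: equil_u.
  apply: in_ball_curve => //.
  have : 0 <= (x1 - E + r / 2) * (r / 2 + (E - x1)) by apply: mulr_ge0; lra.
  lra.
- split; last exact: equil_u.
  apply: in_ball_curve => //.
  have : 0 <= (E + r / 2 - x2) * (r / 2 + (x2 - E)) by apply: mulr_ge0; lra.
  lra.
- move=> [zx zy] hz he.
  have [q1 q2 q3 q4 q5] := ball _ hz.
  rewrite /= in q1 q2 q3 q4 q5.
  have h1z : 0 < 1 + k * zx by have := mulr_gt0 hk (_ : 0 < zx); lra.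
  have [ey hu] := u_equil _ _ _ q3 q5 h1z he.
  rewrite /= in ey; rewrite ey.
  have [->|n1] := eqVneq zx x1; first by left.
  have [->|n2] := eqVneq zx x2; first by right.
  exfalso; apply: (three_roots m x1 x2 zx) => //.
  + by rewrite lt_eqF //; lra.
  + by rewrite eq_sym.
  + by rewrite eq_sym.
  + apply: Kp => //; apply/andP; split; lra.
have ppos : forall x, 0 < x -> x < 1 -> 0 < b * x * ((1 - x) / c).
  move=> x h0 h1; rewrite !mulr_gt0 //; first by lra.
  by rewrite invr_gt0.
have x1p : 0 < x1 by lra.
have x2p : 0 < x2 by lra.
have x1l : x1 < 1 by lra.
have x2l : x2 < 1 by lra.
split.
-
  have hd := det_mul m x1 h1x1 ux1.
  have LE : LL m x1 E < 0.
    have := I1 m x1 E; rewrite ux1 subr0 => e.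
    have hx : 0 < E - x1 by lra.
    have : (E - x1) * LL m x1 E < 0 by rewrite -e.
    by rewrite pmulr_rlt0.
  have := I2 m x1 x1 E.
  have := Kp x1 x1 E inr1 inr1 inrE.
  rewrite -I3 => K0 e.
  have : uu' m x1 < 0.
    have : 0 < (E - x1) * KK m x1 x1 E by rewrite mulr_gt0 //; lra.
    lra.
  move=> hU; have hq := ppos x1 x1p x1l.
  have : jdet F m (x1, (1 - x1) / c) * (1 + k * x1) < 0 by rewrite hd pmulr_rlt0.
  by rewrite pmulr_llt0.
- have hd := det_mul m x2 h1x2 ux2.
  have LE : 0 < LL m E x2.
    have := I1 m E x2; rewrite ux2 sub0r => e.
    have hx : 0 < x2 - E by lra.
    have : 0 < (x2 - E) * LL m E x2 by rewrite -e; lra.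
    by rewrite pmulr_rgt0.
  have := I2 m E x2 x2.
  have := Kp E x2 x2 inrE inr2 inr2.
  rewrite -I3 => K0 e.
  have : 0 < uu' m x2.
    have : 0 < (x2 - E) * KK m E x2 x2 by rewrite mulr_gt0 //; lra.
    lra.
  move=> hU; have hq := ppos x2 x2p x2l.
  have : 0 < jdet F m (x2, (1 - x2) / c) * (1 + k * x2) by rewrite hd pmulr_rgt0.
  by rewrite pmulr_lgt0.
- apply: disc_pos => //=.
  by apply: divr_gt0; lra.
Qed.
End Core2.

Lemma C2 (R : realType) (k c E : R) : c != 0 -> E != 0 -> E*k+1 != 0 ->
  (- a_1 k c E * c - m_SN k c E + 1)*k + m_SN k c E = 
   (k * m_SN k c E * E + (c-1)/E^+2) - 3*k* m_SN k c E *E.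
Proof.
move=> c0 E0 Ek; rewrite /a_1 /m_SN.
have h : E ^+ 2 * k ^+ 2 + 2 * E * k + 1 = (E*k+1)^+2 by ring.
rewrite h. field. by rewrite c0 E0 Ek.
Qed.
Lemma C1 (R : realType) (k c E : R) : c != 0 -> E != 0 -> E*k+1 != 0 ->
  - a_1 k c E * c - k - m_SN k c E + 1 = 3*k* m_SN k c E*E^+2 - 2*(k * m_SN k c E * E + (c-1)/E^+2)*E.
Proof.
move=> c0 E0 Ek; rewrite /a_1 /m_SN.
have h : E ^+ 2 * k ^+ 2 + 2 * E * k + 1 = (E*k+1)^+2 by ring.
rewrite h. field. by rewrite c0 E0 Ek.
Qed.

Theorem theorem10 (R : realType) (b k c E : R) :
  0 < b -> 0 < k -> 1 < c -> 0 < E < 1 ->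
  0 < a_1 k c E -> 0 < m_SN k c E ->
  1 - a_1 k c E * c - k < m_SN k c E ->
  k < (a_1 k c E)^-1 - 1 ->
  c != (E^+3 * k^+3 + 3 * E^+2 * k^+2 + 3 * E * k + 1)
       / (3 * E^+2 * k^+2 + 3 * E * k + 1) ->
  saddle_node_bif (lv_field b c k (a_1 k c E)) (m_SN k c E) (E, (1 - E) / c).
Proof.
move=> hb hk hc /andP[hE0 hE1] ha hm0 _ _ _.
have c0 : c != 0 by rewrite gt_eqF //; lra.
have E0 : E != 0 by rewrite gt_eqF.
have Ek : E * k + 1 != 0.
  by rewrite gt_eqF //; have := mulr_gt0 hE0 hk; lra.
have H2 := C2 R k c E c0 E0 Ek.
have H1 := C1 R k c E c0 E0 Ek.
move: H2 H1.
set m0 := m_SN k c E.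
set A0 := k * m0 * E + (c - 1) / E ^+ 2 => H2 H1.
have H0 : c - 1 = A0 * E ^+ 2 - k * m0 * E ^+ 3.
  by rewrite /A0; field.
have hA0 : 0 < A0.
  rewrite /A0; apply: addr_gt0; first exact: mulr_gt0 (mulr_gt0 hk hm0) hE0.
  by apply: divr_gt0; [lra | rewrite exprn_gt0].
exact: (core _ _ _ _ _ _ _ _ hb hk hc ha hE0 hE1 hm0 hA0 H2 H1 H0).
Qed.
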